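(* Let $A\in\mathbb R^{n\times n}$ be Hurwitz, $L\in\mathbb R^{n\times m}$, and $G_{yv}(s):=(sI-A)^{-1}L$. Let $P,\overline P,P^\dagger,\overline P^\dagger$ be matrices with $PP^\dagger=I$, $\overline P\,\overline P^\dagger=I$ satisfying: (C1) $P^\dagger P+\overline P^\dagger\overline P=I_n$; (C2) $PAP^\dagger$ and $\overline PA\overline P^\dagger$ are Hurwitz; (C3) $PL=0$ and $\overline PL$ is nonsingular. Define $$X(s):=P-(sI-PAP^\dagger)^{-1}PA\overline P^\dagger\overline P.$$ Then a transfer matrix $Q\in\mathcal{RH}_\infty$ (with $n$ columns) satisfies $Q\,G_{yv}=0$ if and only if there exists $\hat Q\in\mathcal{RH}_\infty$ such that $Q=\hat QX$.
   Context: $\mathcal{RH}_\infty$ denotes the set of stable, proper, real rational transfer matrices. A square real matrix is Hurwitz if all its eigenvalues have negative real part. *)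

(* Defs.v *)
From HB Require Import structures.
From mathcomp Require Import all_boot all_order all_algebra fraction.
Set Implicit Arguments. Unset Strict Implicit. Unset Printing Implicit Defensive.
Import Order.TTheory GRing.Theory Num.Theory.
Local Open Scope ring_scope.

(* The ground field: C is an (abstract) algebraically closed numeric field
   (e.g. the complex numbers); "real" numbers are its elements satisfying
   [Num.real]. *)

Notation ratf C := {fraction {poly C}}.
Notation "x %:F" := (@FracField.tofrac _ x) : ring_scope.

(* Real matrices: library notation [M \is a realmx] (= mxOver Num.real). *)

Definition hurwitz (C : numClosedFieldType) n (A : 'M[C]_n) : Prop :=
  forall lam : C, eigenvalue A lam -> 'Re lam < 0.

Definition RHinf_scalar (C : numClosedFieldType) (f : ratf C) : Prop :=
  exists (p q : {poly C}),
    p \is a polyOver Num.real /\ q \is a polyOver Num.real /\ q != 0 /\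
    (size p <= size q)%N /\
    (forall z : C, root q z -> 'Re z < 0) /\
    f = (p%:F) / (q%:F).

Definition RHinf (C : numClosedFieldType) k n (Q : 'M[ratf C]_(k, n)) : Prop :=
  forall i j, RHinf_scalar (Q i j).

Definition cmx (C : numClosedFieldType) m n (M : 'M[C]_(m, n)) : 'M[ratf C]_(m, n) :=
  map_mx (fun a : C => (a%:P)%:F) M.

Definition svar (C : numClosedFieldType) : ratf C := ('X)%:F.

Definition resolvent (C : numClosedFieldType) n (M : 'M[C]_n) : 'M[ratf C]_n :=
  invmx ((svar C)%:M - cmx M).

(* Main.v *)
Require Import Defs.
From HB Require Import structures.
From mathcomp Require Import all_boot all_order all_algebra fraction.
Import Order.TTheory GRing.Theory Num.Theory.
Local Open Scope ring_scope.

Lemma X_kill (F : fieldType) n m p (a : 'M[F]_n) (l : 'M[F]_(n,m)) (P : 'M[F]_(p,n)) (Pd : 'M[F]_(n,p)) q (Pb : 'M[F]_(q,n)) (Pbd : 'M[F]_(n,q)) (c : F) :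
  Pd *m P + Pbd *m Pb = 1%:M -> P *m l = 0 ->
  (c%:M - a) \in unitmx -> (c%:M - P *m a *m Pd) \in unitmx ->
  (P - invmx (c%:M - P *m a *m Pd) *m (P *m a *m Pbd *m Pb)) *m (invmx (c%:M - a) *m l) = 0.
Proof.
move=> C1 Pl ua uB.
set V := invmx _ *m l.
have hV : (c%:M - a) *m V = l by rewrite /V mulmxA mulmxV // mul1mx.
move: V hV => V hV.
have e : (c%:M - P *m a *m Pd) *m P - P *m a *m Pbd *m Pb = P *m (c%:M - a).
  rewrite mulmxBl mulmxBr mul_scalar_mx mul_mx_scalar -[in RHS](mulmx1 (P *m a)) -C1.
  by rewrite mulmxDr !mulmxA opprD addrA.
move: e uB; set B := c%:M - P *m a *m Pd; set Y := P *m a *m Pbd *m Pb => e uB.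
rewrite -(mulKmx uB (_ *m V)).
have -> : B *m ((P - invmx B *m Y) *m V) = 0.
  by rewrite mulmxA mulmxBr mulmxA mulmxV // mul1mx e -mulmxA hV Pl.
by rewrite mulmx0.
Qed.

Lemma Q_fact (F : fieldType) n m p (a : 'M[F]_n) (l : 'M[F]_(n,m)) (P : 'M[F]_(p,n)) (Pd : 'M[F]_(n,p)) (Pb : 'M[F]_(m,n)) (Pbd : 'M[F]_(n,m)) (c : F) k (Q : 'M[F]_(k,n)) :
  P *m Pd = 1%:M -> Pd *m P + Pbd *m Pb = 1%:M -> P *m l = 0 -> Pb *m l \in unitmx ->
  (c%:M - a) \in unitmx -> (c%:M - P *m a *m Pd) \in unitmx ->
  Q *m (invmx (c%:M - a) *m l) = 0 ->
  Q = (Q *m Pd) *m (P - invmx (c%:M - P *m a *m Pd) *m (P *m a *m Pbd *m Pb)).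
Proof.
move=> PPd C1 Pl ul ua uB QG.
have PPbd : P *m Pbd *m Pb = 0.
  have : P *m (Pd *m P + Pbd *m Pb) = P by rewrite C1 mulmx1.
  rewrite mulmxDr !mulmxA PPd mul1mx -[in RHS](addr0 P) => /addrI.
  by rewrite -mulmxA => ->.
set W := Q *m invmx (c%:M - a).
have Wl : W *m l = 0 by rewrite /W -mulmxA.
have WPbd : W *m Pbd = 0.
  have : W *m Pbd *m (Pb *m l) = 0.
    have : W *m (Pd *m P + Pbd *m Pb) *m l = 0 by rewrite C1 mulmx1.
    by rewrite mulmxDr mulmxDl -!mulmxA Pl !mulmx0 add0r !mulmxA.
  by move=> /(congr1 (mulmx^~ (invmx (Pb *m l)))); rewrite mulmxK // mul0mx.
have WW : W = W *m Pd *m P.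
  by rewrite -{1}[W]mulmx1 -C1 mulmxDr !mulmxA WPbd mul0mx addr0.
have QW : Q = W *m Pd *m P *m (c%:M - a) by rewrite -WW /W mulmxKV.
move: uB; set B := c%:M - P *m a *m Pd; set Y := P *m a *m Pbd *m Pb => uB.
have QPd : Q *m Pd = W *m Pd *m B.
  rewrite QW -!mulmxA; congr (_ *m _); rewrite /B mulmxBl mulmxBr mul_scalar_mx.
  by rewrite -scalemxAr PPd scalemx1 !mulmxA.
have QPbd : Q *m Pbd *m Pb = - (W *m Pd *m Y).
  have h : P *m (c%:M - a) *m Pbd *m Pb = - Y.
    by rewrite mulmxBr mul_mx_scalar !mulmxBl -!scalemxAl PPbd scaler0 sub0r.
  by rewrite QW -!(mulmxA (W *m Pd)) h mulmxN.
by rewrite mulmxBr {2}QPd mulmxA mulmxK // -QPbd -!mulmxA -mulmxDr C1 mulmx1.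
Qed.


Section S.
Variable C : numClosedFieldType.

Lemma cmxE m n (M : 'M[C]_(m,n)) : cmx M = map_mx (@tofrac _ \o polyC) M.
Proof. by []. Qed.

Lemma cmxM m n r (A : 'M[C]_(m,n)) (B : 'M[C]_(n,r)) : cmx (A *m B) = cmx A *m cmx B.
Proof. by rewrite !cmxE map_mxM. Qed.
Lemma cmxB m n (A B : 'M[C]_(m,n)) : cmx (A - B) = cmx A - cmx B.
Proof. by rewrite !cmxE map_mxB. Qed.
Lemma cmxD m n (A B : 'M[C]_(m,n)) : cmx (A + B) = cmx A + cmx B.
Proof. by rewrite !cmxE map_mxD. Qed.
Lemma cmx0 m n : cmx (0 : 'M[C]_(m,n)) = 0.
Proof. by rewrite !cmxE map_mx0. Qed.
Lemma cmx1 n : cmx (1%:M : 'M[C]_n) = 1%:M.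
Proof. by rewrite !cmxE map_scalar_mx rmorph1. Qed.
Lemma cmx_unit n (A : 'M[C]_n) : A \in unitmx -> cmx A \in unitmx.
Proof. by rewrite !cmxE map_unitmx. Qed.

Lemma res_unit n (M : 'M[C]_n) : (svar C)%:M - cmx M \in unitmx.
Proof.
have -> : (svar C)%:M - cmx M = map_mx (@tofrac _) (char_poly_mx M).
  by rewrite /char_poly_mx map_mxB map_scalar_mx /cmx -map_mx_comp.
rewrite unitmxE det_map_mx unitfE tofrac_eq0.
exact: monic_neq0 (char_poly_monic M).
Qed.


End S.

Lemma polyR_D (C : numClosedFieldType) (p q : {poly C}) : p \is a polyOver Num.real -> q \is a polyOver Num.real -> (p + q) \is a polyOver Num.real.
Proof.
move=> hp hq.
change (p + q \in polyOver (@Num.Def.real_num_pred C)).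
by rewrite rpredD.
Qed.
Lemma polyR_M (C : numClosedFieldType) (p q : {poly C}) : p \is a polyOver Num.real -> q \is a polyOver Num.real -> (p * q) \is a polyOver Num.real.
Proof.
move=> hp hq.
change (p * q \in polyOver (@Num.Def.real_num_pred C)).
by rewrite rpredM.
Qed.
Lemma polyR_1 (C : numClosedFieldType) : (1 : {poly C}) \is a polyOver Num.real.
Proof.
change ((1 : {poly C}) \in polyOver (@Num.Def.real_num_pred C)).
by rewrite rpred1.
Qed.
Lemma polyR_C (C : numClosedFieldType) (c : C) : c \is Num.real -> c%:P \is a polyOver Num.real.
Proof.
move=> h; change (c%:P \in polyOver (@Num.Def.real_num_pred C)).
by rewrite polyOverC.
Qed.
Lemma fr_add (C : numClosedFieldType) (p1 q1 p2 q2 : {poly C}) : q1 != 0 -> q2 != 0 ->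
 p1%:F / q1%:F + p2%:F / q2%:F = (p1 * q2 + p2 * q1)%:F / (q1 * q2)%:F.
Proof.
move=> h1 h2.
rewrite (@tofracD _ (p1 * q2)).
rewrite !(@tofracM _).
rewrite addf_div //; by rewrite tofrac_eq0.
Qed.
Lemma fr_mul (C : numClosedFieldType) (p1 q1 c : {poly C}) :
 p1%:F / q1%:F * c%:F = (c * p1)%:F / q1%:F.
Proof.
by rewrite (@tofracM _ c) mulrAC (mulrC p1%:F).
Qed.


Section S2.
Variable C : numClosedFieldType.
Lemma RH0 : RHinf_scalar (0 : ratf C).
Proof.
exists 0, 1; rewrite polyOver0 polyR_1 oner_neq0 size_poly0; do !split => //.
  by move=> z; rewrite rootC oner_eq0.
by rewrite tofrac0 mul0r.
Qed.

Lemma RHD (f g : ratf C) : RHinf_scalar f -> RHinf_scalar g -> RHinf_scalar (f + g).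
Proof.
move=> [p1 [q1 [rp1 [rq1 [nq1 [s1 [r1 ->]]]]]]] [p2 [q2 [rp2 [rq2 [nq2 [s2 [r2 ->]]]]]]].
exists (p1 * q2 + p2 * q1), (q1 * q2); do !split.
- by rewrite polyR_D // polyR_M.
- by rewrite polyR_M.
- by rewrite mulf_neq0.
- rewrite (leq_trans (size_polyD _ _)) // geq_max (size_mul nq1 nq2).
  apply/andP; split; apply: (leq_trans (size_mul_leq _ _)).
    by rewrite -!subn1; apply: leq_sub2r; rewrite leq_add2r.
  by rewrite -!subn1; apply: leq_sub2r; rewrite [X in (_ <= X)%N]addnC leq_add2r.
- by move=> z; rewrite rootM => /orP [/r1|/r2].
- exact: fr_add.
Qed.

Lemma RHMc (f : ratf C) (c : C) : c \is Num.real -> RHinf_scalar f -> RHinf_scalar (f * (c%:P)%:F).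
Proof.
move=> rc [p1 [q1 [rp1 [rq1 [nq1 [s1 [r1 ->]]]]]]].
exists (c%:P * p1), q1; do !split => //.
- by rewrite polyR_M // polyR_C.
- by rewrite mul_polyC (leq_trans (size_scale_leq _ _)).
- exact: fr_mul.
Qed.
End S2.
Lemma RH_mulc (C : numClosedFieldType) k n r (Q : 'M[ratf C]_(k,n)) (M : 'M[C]_(n,r)) :
  M \is a realmx -> RHinf Q -> RHinf (Q *m cmx M).
Proof.
move=> /mxOverP hM hQ i j; rewrite !mxE.
apply: (big_ind (@RHinf_scalar C)) => //; first exact: RH0; first exact: RHD.
by move=> l _; rewrite mxE; apply: RHMc.
Qed.

Theorem lemma3 (C : numClosedFieldType) (n m p : nat)
  (A : 'M[C]_n) (L : 'M[C]_(n, m))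
  (P : 'M[C]_(p, n)) (Pd : 'M[C]_(n, p))
  (Pb : 'M[C]_(m, n)) (Pbd : 'M[C]_(n, m)) :
  A \is a realmx -> L \is a realmx -> P \is a realmx -> Pd \is a realmx -> Pb \is a realmx -> Pbd \is a realmx ->
  hurwitz A ->
  P *m Pd = 1%:M ->
  Pb *m Pbd = 1%:M ->
  (* (C1) *) Pd *m P + Pbd *m Pb = 1%:M ->
  (* (C2) *) hurwitz (P *m A *m Pd) -> hurwitz (Pb *m A *m Pbd) ->
  (* (C3) *) P *m L = 0 -> Pb *m L \in unitmx ->
  let Gyv := resolvent A *m cmx L in
  let X := cmx P - resolvent (P *m A *m Pd) *m cmx (P *m A *m Pbd *m Pb) in
  forall (k : nat) (Q : 'M[{fraction {poly C}}]_(k, n)),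
    RHinf Q ->
    (Q *m Gyv = 0 <->
     exists Qh : 'M[{fraction {poly C}}]_(k, p), RHinf Qh /\ Q = Qh *m X).
Proof.
move=> _ _ _ rPd _ _ _ PPd _ C1 _ _ PL uPbL Gyv X k Q RHQ.
have PPd' : cmx P *m cmx Pd = 1%:M by rewrite -cmxM PPd cmx1.
have C1' : cmx Pd *m cmx P + cmx Pbd *m cmx Pb = 1%:M.
  by rewrite -!cmxM -cmxD C1 cmx1.
have PL' : cmx P *m cmx L = 0 by rewrite -cmxM PL cmx0.
have uPbL' : cmx Pb *m cmx L \in unitmx by rewrite -cmxM cmx_unit.
have ua := @res_unit C _ A.
have uB := @res_unit C _ (P *m A *m Pd).
rewrite !cmxM in uB.
have eX : X = cmx P - invmx ((svar C)%:M - cmx P *m cmx A *m cmx Pd) *m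
   (cmx P *m cmx A *m cmx Pbd *m cmx Pb) by rewrite /X /resolvent !cmxM.
rewrite /Gyv /resolvent eX; split.
- move=> h; exists (Q *m cmx Pd); split; first exact: RH_mulc.
  exact: (@Q_fact _ _ _ _ _ _ _ _ _ _ _ _ _ PPd' C1' PL' uPbL' ua uB h).
- move=> [Qh [_ ->]]; by rewrite -mulmxA (@X_kill _ _ _ _ _ _ _ _ _ _ _ _ C1' PL' ua uB) mulmx0.
Qed.
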